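(* Let $G$ and $H$ be connected graphs such that $G_{SR}$ and $H_{SR}$ are regular and at least one of them is bipartite. Then $$dim_s(G\square H)=\frac{|\partial(G)|\,|\partial(H)|}{2}.$$
   Context: Graphs are finite, simple, undirected; for connected $G$, $d_G$ is the shortest-path distance and $I_G[u,v]$ is the set of vertices lying on some shortest $u$–$v$ path. A vertex $w$ strongly resolves vertices $u,v$ if $v\in I_G[u,w]$ or $u\in I_G[v,w]$. A strong resolving set of $G$ is a set $S\subseteq V(G)$ such that every pair of vertices is strongly resolved by some vertex of $S$; $dim_s(G)$ is the minimum cardinality of such a set. A vertex $u$ is maximally distant from $v$ if $d_G(v,w)\le d_G(u,v)$ for every neighbor $w$ of $u$; distinct $u,v$ are mutually maximally distant if each is maximally distant from the other. The boundary $\partial(G)$ is the set of vertices mutually maximally distant with some vertex. The strong resolving graph $G_{SR}$ has vertex set $\partial(G)$, two vertices adjacent iff they are mutually maximally distant in $G$. $G\square H$ denotes the Cartesian product: vertex set $V(G)\times V(H)$, $(a,b)\sim(c,d)$ iff ($a=c$ and $bd\in E(H)$) or ($b=d$ and $ac\in E(G)$). *)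

(* Defs.v *)
From mathcomp Require Import all_boot.
Set Implicit Arguments. Unset Strict Implicit. Unset Printing Implicit Defensive.

Section Graphs.
Variable T : finType.
Variable e : rel T.

Definition simple_graph := symmetric e /\ irreflexive e.
Definition connected_graph := forall u v : T, connect e u v.

Definition walkb (u v : T) (n : nat) : bool :=
  [exists p : n.-tuple T, path e u p && (last u p == v)].

(* In a connected
   graph such a walk of length < #|T| always exists; the default value
   #|T| is only used for disconnected pairs, which never occur below. *)
Definition dist (u v : T) : nat :=
  \big[minn/#|T|]_(n < #|T| | walkb u v n) n.

Definition interval (u v : T) : {set T} :=
  [set w | dist u w + dist w v == dist u v].

Definition strongly_resolves (w u v : T) : bool :=
  (v \in interval u w) || (u \in interval v w).

Definition strong_resolving_setb (S : {set T}) : bool :=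
  [forall u, forall v, [exists w in S, strongly_resolves w u v]].

(* strong metric dimension: minimum cardinality of a strong resolving set
   (setT is always one, so the minimum is over a nonempty family) *)
Definition sdim : nat :=
  \big[minn/#|T|]_(S : {set T} | strong_resolving_setb S) #|S|.

Definition max_distant (u v : T) : bool :=
  [forall w, e u w ==> (dist v w <= dist u v)].

Definition mutually_max_distant (u v : T) : bool :=
  [&& u != v, max_distant u v & max_distant v u].

(* boundary of G = vertex set of G_SR *)
Definition boundary : {set T} :=
  [set u | [exists v, mutually_max_distant u v]].

(* G_SR is regular: all vertices of G_SR have the same degree in G_SR
   (neighbours in G_SR are the mutually maximally distant vertices) *)
Definition SR_regular : Prop :=
  exists k : nat, forall u, u \in boundary ->
    #|[set v | mutually_max_distant u v]| = k.

Definition SR_bipartite : Prop :=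
  exists A : {set T}, forall u v, mutually_max_distant u v ->
    (u \in A) != (v \in A).

End Graphs.

Definition cart_prod (T1 T2 : finType) (e1 : rel T1) (e2 : rel T2)
  : rel (T1 * T2)%type :=
  fun x y => ((x.1 == y.1) && e2 x.2 y.2) || ((x.2 == y.2) && e1 x.1 y.1).

(* Main.v *)
Require Import Defs.
From mathcomp Require Import all_boot.
From Stdlib Require Import Lia.
From mathcomp Require Import zify.
Set Implicit Arguments. Unset Strict Implicit. Unset Printing Implicit Defensive.


Section Walks.
Variable T : finType.
Variable e : rel T.

Lemma walkP u v n :
  reflect (exists p : seq T, [/\ size p = n, path e u p & last u p = v])
          (walkb e u v n).
Proof.
apply: (iffP existsP) => [[t /andP[pt /eqP lt]]|[p [sp pp lp]]].
  by exists (val t); rewrite size_tuple.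
have Hs : size p == n by apply/eqP.
by exists (Tuple Hs); rewrite /= pp lp eqxx.
Qed.

Lemma walk0 u v : walkb e u v 0 = (u == v).
Proof.
apply/walkP/eqP => [[[|x p] [//= _ _ ->]]|->]; by exists [::].
Qed.

Lemma walkS u v n :
  walkb e u v n.+1 = [exists u', e u u' && walkb e u' v n].
Proof.
apply/walkP/existsP => [[[|x p] [//= [sp] /andP[ux pp] lp]]|[x /andP[ux /walkP[p [sp pp lp]]]]].
  by exists x; rewrite ux; apply/walkP; exists p.
by exists (x :: p); rewrite /= sp ux pp lp.
Qed.

Lemma walk_edge u v : e u v -> walkb e u v 1.
Proof. by move=> uv; rewrite walkS; apply/existsP; exists v; rewrite uv walk0 eqxx. Qed.

Lemma walk_cat u v w m n :
  walkb e u v m -> walkb e v w n -> walkb e u w (m + n).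
Proof.
elim: m u => [|m IH] u; first by rewrite walk0 => /eqP->.
rewrite walkS => /existsP[x /andP[ux xv]] vw.
by rewrite addSn walkS; apply/existsP; exists x; rewrite ux (IH _ xv vw).
Qed.

Lemma walk_connect u v n : walkb e u v n -> connect e u v.
Proof. by move/walkP=> [p [_ pp lp]]; apply/connectP; exists p. Qed.

Lemma connect_walk u v : connect e u v -> exists n, walkb e u v n.
Proof.
by move/connectP=> [p pp lp]; exists (size p); apply/walkP; exists p.
Qed.

Lemma walk_short u v m :
  walkb e u v m -> exists n, [/\ n < #|T|, n <= m & walkb e u v n].
Proof.
move/walkP=> [p [sp pp <-]].
case: (shortenP pp) => p' pp' up' sub.
exists (size p'); split.
- by rewrite -ltnS -/(size (u :: p')) -(card_uniqP up') ltnS max_card.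
- rewrite -sp; apply: uniq_leq_size; last exact: sub.
  by case/andP: up'.
- by apply/walkP; exists p'.
Qed.

Lemma bigmin_le (N : nat) (P : pred 'I_N) (i : 'I_N) :
  P i -> \big[minn/N]_(j < N | P j) (j : nat) <= i.
Proof.
move=> Pi; rewrite /index_enum.
have : i \in Finite.enum 'I_N by rewrite -enumT mem_enum.
elim: (Finite.enum 'I_N) => [//|x r IH].
rewrite inE big_cons; case/orP=> [/eqP<-|ir].
  by rewrite Pi geq_minl.
case: (P x); last exact: IH.
by rewrite geq_min IH ?orbT.
Qed.

Lemma bigmin_attain (N : nat) (P : pred 'I_N) :
  let m := \big[minn/N]_(j < N | P j) (j : nat) in
  (m == N) || [exists j : 'I_N, P j && (m == j)].
Proof.
pose K m := (m == N) || [exists j : 'I_N, P j && (m == j)].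
rewrite /=; apply: (@big_ind _ K) => [|x y|j Pj]; first by rewrite /K eqxx.
- rewrite /K; case/orP=> [/eqP->|/existsP[i /andP[Pi /eqP->]]];
  case/orP=> [/eqP->|/existsP[k /andP[Pk /eqP->]]];
  rewrite /minn; case: ifP => _; rewrite ?eqxx //;
  apply/orP; right; apply/existsP; by [exists i; rewrite Pi eqxx | exists k; rewrite Pk eqxx].
- by rewrite /K; apply/orP; right; apply/existsP; exists j; rewrite Pj eqxx.
Qed.

Lemma dist_le u v m : walkb e u v m -> dist e u v <= m.
Proof.
move/walk_short=> [n [nT nm w]].
apply: leq_trans nm.
exact: (@bigmin_le #|T| (fun j : 'I_#|T| => walkb e u v j) (Ordinal nT)).
Qed.

Lemma dist_walk u v m : walkb e u v m -> walkb e u v (dist e u v).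
Proof.
move/walk_short=> [n [nT _ w]].
have := @bigmin_le #|T| (fun j : 'I_#|T| => walkb e u v j) (Ordinal nT) w.
have := @bigmin_attain #|T| (fun j : 'I_#|T| => walkb e u v j).
rewrite /dist /=.
case/orP=> [/eqP->|/existsP[j /andP[Pj /eqP->]]] //.
by rewrite leqNgt nT.
Qed.

End Walks.



Section Dist.
Variable T : finType.
Variable e : rel T.
Hypothesis esym : symmetric e.
Hypothesis conn : connected_graph e.

Local Notation d := (dist e).

Lemma walk_rev u v n : walkb e u v n -> walkb e v u n.
Proof.
elim: n u => [|n IH] u; first by rewrite !walk0 eq_sym.
rewrite walkS => /existsP[x /andP[ux xv]].
rewrite -addn1; apply: walk_cat (IH _ xv) _.
by apply: walk_edge; rewrite esym.
Qed.

Lemma dwalk u v : walkb e u v (d u v).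
Proof. by case: (connect_walk (conn u v)) => n; apply: dist_walk. Qed.

Lemma d0 u : d u u = 0.
Proof. by apply/eqP; rewrite -leqn0; apply: dist_le; rewrite walk0. Qed.

Lemma d0E u v : d u v = 0 -> u = v.
Proof. by move=> h; have := dwalk u v; rewrite h walk0 => /eqP. Qed.

Lemma dsym u v : d u v = d v u.
Proof.
by apply/eqP; rewrite eqn_leq !dist_le // walk_rev // dwalk.
Qed.

Lemma dtri u v w : d u w <= d u v + d v w.
Proof. by apply: dist_le; apply: walk_cat; apply: dwalk. Qed.

Lemma dedge u w v : e u w -> d u v <= (d w v).+1.
Proof.
move=> uw; rewrite -add1n; apply: dist_le; apply: walk_cat (dwalk _ _).
exact: walk_edge.
Qed.

Lemma dstep u v : u != v -> exists2 u', e u u' & (d u' v).+1 = d u v.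
Proof.
move=> uv; have := dwalk u v.
case E: (d u v) => [|n]; first by move: uv; rewrite (d0E E) eqxx.
rewrite walkS => /existsP[x /andP[ux xv]].
exists x => //; apply/eqP; rewrite eqn_leq -E dedge // andbT.
by rewrite E ltnS dist_le.
Qed.

Lemma maxd_ext u v :
  exists w, (d v u + d u w == d v w) && max_distant e w v.
Proof.
pose P w := d v u + d u w == d v w.
have Pu : P u by rewrite /P d0 addn0.
case: (arg_maxnP (fun w => d v w) Pu) => w Pw Hmax.
exists w; rewrite /P in Pw; rewrite Pw /=.
apply/forallP=> w'; apply/implyP=> ww'.
rewrite leqNgt; apply/negP=> lt.
have h1 : d v w' <= (d v w).+1 by rewrite (dsym v w') (dsym v w) dedge // esym.
have h2 : d u w' <= (d u w).+1 by rewrite (dsym u w') (dsym u w) dedge // esym.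
have h3 := dtri v u w'.
have Pw' : P w'.
  rewrite /P; move/eqP: Pw => Pw; apply/eqP.
  rewrite dsym in lt; lia.
have := Hmax w' Pw'; move/eqP: Pw => Pw; rewrite dsym in lt; lia.
Qed.

Lemma maxdP w v : reflect (forall w', e w w' -> d v w' <= d w v) (max_distant e w v).
Proof.
apply: (iffP forallP) => [h w' ww'|h w']; first by move/implyP: (h w'); apply.
by apply/implyP; apply: h.
Qed.

Lemma mmd_ext u v : u != v ->
  exists w z, [/\ mutually_max_distant e w z, d v u + d u w = d v w &
                  d w v + d v z = d w z].
Proof.
move=> uv.
case: (maxd_ext u v) => w /andP[/eqP P1 /maxdP M1].
case: (maxd_ext v w) => z /andP[/eqP P2 M2].
exists w, z; split=> //.
rewrite /mutually_max_distant M2 andbT; apply/andP; split.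
  apply/eqP=> wz; subst z; move: P2; rewrite d0.
  have : d v u != 0 by apply/eqP=> /d0E vu; rewrite vu eqxx in uv.
  rewrite (dsym w v); lia.
apply/maxdP=> w' ww'.
have h1 := M1 w' ww'.
have h2 := dtri z v w'.
have := dsym z v; lia.
Qed.


Lemma mmd_sym x y : mutually_max_distant e x y = mutually_max_distant e y x.
Proof. by rewrite /mutually_max_distant eq_sym; congr (_ && _); exact: andbC. Qed.

Lemma res_cover_aux x y w : d x y + d y w = d x w -> max_distant e y x -> w = y.
Proof.
move=> h /maxdP M; apply/eqP; rewrite eq_sym; apply/negPn/negP=> yw.
case: (dstep yw) => y' yy' h'.
have := M y' yy'; have := dtri x y' w; rewrite (dsym y x); lia.
Qed.

Lemma res_cover (S : {set T}) x y : strong_resolving_setb e S ->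
  mutually_max_distant e x y -> (x \in S) || (y \in S).
Proof.
move=> /forallP /(_ x) /forallP /(_ y) /existsP [w /andP[wS R]].
case/and3P=> _ Mxy Myx; move: R.
rewrite /strongly_resolves /interval !inE => /orP[/eqP h|/eqP h].
  by rewrite -(res_cover_aux h Myx) wS orbT.
by rewrite -(res_cover_aux h Mxy) wS.
Qed.

Lemma cover_res (S : {set T}) :
  (exists x y, mutually_max_distant e x y) ->
  (forall x y, mutually_max_distant e x y -> (x \in S) || (y \in S)) ->
  strong_resolving_setb e S.
Proof.
move=> [x0 [y0 M0]] cov.
apply/forallP=> u; apply/forallP=> v; apply/existsP.
have triv w : u = v -> strongly_resolves e w u v.
  by move=> <-; rewrite /strongly_resolves /interval inE d0 add0n eqxx.
case: (eqVneq u v) => [uv|uv].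
  by case/orP: (cov _ _ M0) => h; [exists x0|exists y0]; rewrite h triv.
case: (mmd_ext uv) => w [z [M P1 P2]].
case/orP: (cov _ _ M) => h.
  exists w; rewrite h /strongly_resolves /interval !inE P1 eqxx orbT //.
exists z; rewrite h /strongly_resolves /interval !inE /=.
apply/orP; left; apply/eqP.
have h1 := dtri z u w; have h2 := dtri z v u.
rewrite (dsym u v) (dsym u z) (dsym v z).
rewrite (dsym w v) (dsym w z) in P2.
have := dsym z v; lia.
Qed.

Lemma mmd_exists (u v : T) : u != v -> exists x y, mutually_max_distant e x y.
Proof. by move=> uv; case: (mmd_ext uv) => w [z [M _ _]]; exists w, z. Qed.

End Dist.



Lemma maxd_self (T : finType) (e : rel T) :
  symmetric e -> irreflexive e -> connected_graph e -> 1 < #|T| ->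
  forall a, max_distant e a a = false.
Proof.
move=> esym eirr conn /card_gt1P [x [y [_ _ xy]]] a.
have [b ab] : exists b, a != b.
  case: (eqVneq a x) => [ax|ax]; last by exists x.
  by exists y; rewrite ax.
have := dwalk conn a b.
case E: (dist e a b) => [|n].
  by rewrite walk0 => /eqP abE; rewrite abE eqxx in ab.
rewrite walkS => /existsP[c /andP[ac _]].
apply/negP=> /(maxdP e a a) /(_ c ac).
rewrite d0 // leqn0 => /eqP /(d0E conn) ca.
by rewrite ca eirr in ac.
Qed.

Section Prod.
Variables (T1 T2 : finType) (e1 : rel T1) (e2 : rel T2).
Hypotheses (s1 : symmetric e1) (s2 : symmetric e2).
Hypotheses (c1 : connected_graph e1) (c2 : connected_graph e2).
Local Notation P := (cart_prod e1 e2).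

Lemma prod_sym : symmetric P.
Proof.
move=> x y; rewrite /cart_prod (eq_sym x.1) (eq_sym x.2) s1 s2 //.
Qed.

Lemma walk_l a c b m : walkb e1 a c m -> walkb P (a, b) (c, b) m.
Proof.
elim: m a => [|m IH] a; first by rewrite !walk0 => /eqP->.
rewrite !walkS => /existsP[x /andP[ax xc]].
apply/existsP; exists (x, b); rewrite IH // andbT /cart_prod /= ax eqxx.
by rewrite orbT.
Qed.

Lemma walk_r a b d m : walkb e2 b d m -> walkb P (a, b) (a, d) m.
Proof.
elim: m b => [|m IH] b; first by rewrite !walk0 => /eqP->.
rewrite !walkS => /existsP[x /andP[bx xd]].
apply/existsP; exists (a, x); rewrite IH // andbT /cart_prod /= bx eqxx.
by [].
Qed.

Lemma walk_lb m : forall x y, walkb P x y m ->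
  dist e1 x.1 y.1 + dist e2 x.2 y.2 <= m.
Proof.
elim: m => [|m IH] x y.
  by rewrite walk0 => /eqP->; rewrite !d0.
rewrite walkS => /existsP[x' /andP[xx' w]].
have := IH _ _ w.
case/orP: xx' => /andP[/eqP E h].
  have := dedge c2 y.2 h; rewrite E; lia.
have := dedge c1 y.1 h; rewrite E; lia.
Qed.

Lemma dist_prod x y : dist P x y = dist e1 x.1 y.1 + dist e2 x.2 y.2.
Proof.
case: x y => [a b] [c d] /=.
have W : walkb P (a, b) (c, d) (dist e1 a c + dist e2 b d).
  apply: walk_cat (walk_l _ (dwalk c1 a c)) (walk_r _ (dwalk c2 b d)).
apply/eqP; rewrite eqn_leq (dist_le W) /=.
exact: (walk_lb (dist_walk W)).
Qed.

Lemma prod_conn : connected_graph P.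
Proof.
move=> [a b] [c d].
exact: walk_connect (walk_cat (walk_l _ (dwalk c1 a c)) (walk_r _ (dwalk c2 b d))).
Qed.

Lemma maxd_prod x y : max_distant P x y =
  max_distant e1 x.1 y.1 && max_distant e2 x.2 y.2.
Proof.
case: x y => [a b] [c d] /=.
apply/(maxdP P (a,b) (c,d))/andP.
  move=> h; split.
    apply/(maxdP e1 _ _) => a' aa'.
    have := h (a', b); rewrite !dist_prod /= /cart_prod /= aa' eqxx orbT.
    move/(_ isT); rewrite (dsym s2 c2 d b); lia.
  apply/(maxdP e2 _ _) => b' bb'.
  have := h (a, b'); rewrite !dist_prod /= /cart_prod /= bb' eqxx.
  move/(_ isT); rewrite (dsym s1 c1 c a); lia.
move=> [/(maxdP e1 _ _) h1 /(maxdP e2 _ _) h2] [a' b'].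
rewrite !dist_prod /= /cart_prod /=.
case/orP=> /andP[/eqP E h]; rewrite -E.
  have := h2 _ h; rewrite (dsym s1 c1 c a); lia.
have := h1 _ h; rewrite (dsym s2 c2 d b); lia.
Qed.

End Prod.



Lemma bigmin_leF (I : finType) (P : pred I) (F : I -> nat) N i :
  P i -> \big[minn/N]_(j | P j) F j <= F i.
Proof.
move=> Pi; rewrite /index_enum.
have : i \in Finite.enum I by rewrite -enumT mem_enum.
elim: (Finite.enum I) => [//|x r IH].
rewrite inE big_cons; case/orP=> [/eqP<-|ir].
  by rewrite Pi geq_minl.
case: (P x); last exact: IH.
by rewrite geq_min IH ?orbT.
Qed.

Lemma bigmin_geF (I : finType) (P : pred I) (F : I -> nat) N m :
  m <= N -> (forall i, P i -> m <= F i) -> m <= \big[minn/N]_(j | P j) F j.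
Proof.
move=> mN h; apply: (@big_ind _ (fun x => m <= x)) => // x y hx hy.
by rewrite leq_min hx hy.
Qed.

Lemma card_sum (T : finType) (p : pred T) :
  #|[set y | p y]| = \sum_y (p y : nat).
Proof.
rewrite -sum1_card big_mkcond; apply: eq_bigr => y _; rewrite inE.
by case: (p y).
Qed.

Lemma sum_const_cond (T : finType) (A : {set T}) c :
  \sum_x ((x \in A) * c) = #|A| * c.
Proof.
rewrite -sum_nat_const [RHS]big_mkcond /=; apply: eq_bigr => x _.
by case: (x \in A); rewrite ?mul1n ?mul0n.
Qed.

Lemma bound_nonempty (T : finType) (e : rel T) :
  symmetric e -> connected_graph e -> 1 < #|T| -> exists a, a \in boundary e.
Proof.
move=> es conn /card_gt1P [x [y [_ _ xy]]].
case: (mmd_exists es conn xy) => u [v M].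
by exists u; rewrite inE; apply/existsP; exists v.
Qed.

Lemma card_nbr (T : finType) (e : rel T) k :
  (forall u, u \in boundary e -> #|[set v | mutually_max_distant e u v]| = k) ->
  forall a, #|[set v | mutually_max_distant e a v]| = (a \in boundary e) * k.
Proof.
move=> reg a; case: (boolP (a \in boundary e)) => h; first by rewrite reg // mul1n.
rewrite mul0n; apply/eqP; rewrite cards_eq0; apply/eqP/setP => v.
rewrite !inE; apply/negP=> M; move: h; rewrite inE => /existsP; apply.
by exists v.
Qed.

Section Main.
Variables (T1 T2 : finType) (e1 : rel T1) (e2 : rel T2).
Hypotheses (g1 : simple_graph e1) (g2 : simple_graph e2).
Hypotheses (n1 : 1 < #|T1|) (n2 : 1 < #|T2|).
Hypotheses (c1 : connected_graph e1) (c2 : connected_graph e2).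
Local Notation P := (cart_prod e1 e2).

Lemma mmd_prod x y : mutually_max_distant P x y =
  mutually_max_distant e1 x.1 y.1 && mutually_max_distant e2 x.2 y.2.
Proof.
case: g1 g2 => s1 i1 [s2 i2].
case: x y => [a b] [c d].
rewrite /mutually_max_distant !(maxd_prod s1 s2 c1 c2) /=.
case: (eqVneq a c) => [E|ac]; first by rewrite E (maxd_self s1 i1 c1 n1) /= !andbF.
case: (eqVneq b d) => [E|bd]; first by rewrite E (maxd_self s2 i2 c2 n2) /= !andbF.
rewrite xpair_eqE (negbTE ac) /=.
by case: (max_distant e1 a c); case: (max_distant e2 b d); case: (max_distant e1 c a).
Qed.


Lemma deg_prod x :
  \sum_y (mutually_max_distant P x y : nat) =
  #|[set v | mutually_max_distant e1 x.1 v]| * #|[set v | mutually_max_distant e2 x.2 v]|.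
Proof.
rewrite -card_sum -cardsX; apply: eq_card => -[c d]; case: x => a b.
by rewrite !inE mmd_prod.
Qed.

Local Notation B1 := (boundary e1).
Local Notation B2 := (boundary e2).
Local Notation M := (mutually_max_distant P).

Lemma lower (S : {set T1 * T2}) k l :
  (forall u, u \in B1 -> #|[set v | mutually_max_distant e1 u v]| = k) ->
  (forall u, u \in B2 -> #|[set v | mutually_max_distant e2 u v]| = l) ->
  0 < k -> 0 < l -> strong_resolving_setb P S ->
  #|B1| * #|B2| <= 2 * #|S|.
Proof.
case: g1 g2 => s1 i1 [s2 i2].
move=> reg1 reg2 k0 l0 R.
have cov x y : M x y -> (x \in S) || (y \in S).
  exact: (res_cover (prod_sym s1 s2) (prod_conn c1 c2) R).
have degE x : \sum_y (M x y : nat) = (x \in setX B1 B2) * (k * l).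
  rewrite deg_prod (card_nbr reg1) (card_nbr reg2); case: x => a b.
  rewrite in_setX /=.
  by case: (a \in _); case: (b \in _); rewrite /= ?mul0n ?mul1n ?muln0.
have tot : \sum_x \sum_y (M x y : nat) = #|setX B1 B2| * (k * l).
  under eq_bigr => x _ do rewrite degE.
  exact: sum_const_cond.
have le1 : \sum_x \sum_y (M x y : nat) <=
           \sum_x \sum_y ((x \in S) * M x y + (y \in S) * M x y).
  apply: leq_sum => x _; apply: leq_sum => y _.
  case E: (M x y) => //; have := cov x y E.
  by case: (x \in S); case: (y \in S).
have e2' : \sum_x \sum_y ((y \in S) * M x y) = \sum_x \sum_y ((x \in S) * M x y).
  rewrite exchange_big; apply: eq_bigr => y _; apply: eq_bigr => x _.
  by rewrite mmd_sym.
have le2 : \sum_x \sum_y ((x \in S) * M x y) <= #|S| * (k * l).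
  rewrite -sum_const_cond; apply: leq_sum => x _.
  rewrite -big_distrr /= degE.
  by case: (x \in S); case: (x \in setX B1 B2); rewrite /= ?mul1n ?mul0n ?muln0.
have : #|B1| * #|B2| * (k * l) <= 2 * #|S| * (k * l).
  rewrite -cardsX -tot; apply: (leq_trans le1).
  under eq_bigr => x _ do rewrite big_split.
  rewrite big_split /= e2' -mulnA mul2n -addnn.
  by apply: leq_add.
by rewrite leq_pmul2r // muln_gt0 k0 l0.
Qed.

Lemma mmdP_exists : exists x y, M x y.
Proof.
case: g1 g2 => s1 i1 [s2 i2].
case: (bound_nonempty s1 c1 n1) => a; rewrite inE => /existsP[c Ma].
case: (bound_nonempty s2 c2 n2) => b; rewrite inE => /existsP[d Mb].
by exists (a, b), (c, d); rewrite mmd_prod Ma Mb.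
Qed.

Lemma upper_gen (S : {set T1 * T2}) :
  (forall x y, M x y -> (x \in S) || (y \in S)) -> sdim P <= #|S|.
Proof.
case: g1 g2 => s1 i1 [s2 i2] cov.
apply: (@bigmin_leF _ (strong_resolving_setb P) (fun S => #|S|)).
exact: (cover_res (prod_sym s1 s2) (prod_conn c1 c2) mmdP_exists cov).
Qed.

Lemma in_bound (T : finType) (e : rel T) u v :
  mutually_max_distant e u v -> (u \in boundary e) && (v \in boundary e).
Proof.
move=> h; rewrite !inE; apply/andP; split; apply/existsP.
  by exists v.
by exists u; rewrite mmd_sym.
Qed.

Lemma half_cover (T : finType) (e : rel T) (A : {set T}) :
  (forall u v, mutually_max_distant e u v -> (u \in A) != (v \in A)) ->
  exists S1 : {set T}, 2 * #|S1| <= #|boundary e| /\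
    forall u v, mutually_max_distant e u v -> (u \in S1) || (v \in S1).
Proof.
move=> bip.
have hc := cardsID A (boundary e).
case: (leqP #|boundary e :&: A| #|boundary e :\: A|) => h.
  exists (boundary e :&: A); split; first lia.
  move=> u v M; have := bip _ _ M; case/andP: (in_bound M) => bu bv.
  by rewrite !in_setI bu bv; case: (u \in A); case: (v \in A).
exists (boundary e :\: A); split; first lia.
move=> u v M; have := bip _ _ M; case/andP: (in_bound M) => bu bv.
by rewrite !in_setD bu bv; case: (u \in A); case: (v \in A).
Qed.

Lemma upper : SR_bipartite e1 \/ SR_bipartite e2 ->
  2 * sdim P <= #|B1| * #|B2|.
Proof.
case=> [[A bip]|[A bip]].
  case: (half_cover bip) => S1 [hS cov1].
  have := upper_gen (S := setX S1 B2) _.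
  rewrite cardsX => h.
  apply: (leq_trans (leq_mul (leqnn 2) (h _))); last by rewrite mulnA leq_mul2r hS orbT.
  move=> [a b] [c d]; rewrite mmd_prod !in_setX /= => /andP[M1 M2].
  case/andP: (in_bound M2) => -> ->; rewrite !andbT; exact: cov1.
case: (half_cover bip) => S2 [hS cov2].
have := upper_gen (S := setX B1 S2) _.
rewrite cardsX => h.
apply: (leq_trans (leq_mul (leqnn 2) (h _))); last first.
  by rewrite mulnA (mulnC 2) -mulnA leq_mul2l hS orbT.
move=> [a b] [c d]; rewrite mmd_prod !in_setX /= => /andP[M1 M2].
case/andP: (in_bound M1) => -> ->; exact: cov2.
Qed.

End Main.


Theorem theorem10 (T1 T2 : finType) (e1 : rel T1) (e2 : rel T2) :
  simple_graph e1 -> simple_graph e2 ->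
  1 < #|T1| -> 1 < #|T2| ->
  connected_graph e1 -> connected_graph e2 ->
  SR_regular e1 -> SR_regular e2 ->
  SR_bipartite e1 \/ SR_bipartite e2 ->
  2 * sdim (cart_prod e1 e2) = #|boundary e1| * #|boundary e2|.
Proof.
move=> g1 g2 n1 n2 c1 c2 [k reg1] [l reg2] bip.
apply/eqP; rewrite eqn_leq (upper g1 g2 n1 n2 c1 c2 bip) /=.
case: (g1) (g2) => s1 i1 [s2 i2].
have pos (T : finType) (e : rel T) m : symmetric e -> connected_graph e -> 1 < #|T| ->
    (forall u, u \in boundary e -> #|[set v | mutually_max_distant e u v]| = m) -> 0 < m.
  move=> es ec en reg; case: (bound_nonempty es ec en) => a ab.
  rewrite -(reg a ab) card_gt0; apply/set0Pn.
  by move: ab; rewrite inE => /existsP[v M]; exists v; rewrite inE.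
have k0 := pos _ _ _ s1 c1 n1 reg1.
have l0 := pos _ _ _ s2 c2 n2 reg2.
rewrite /sdim; apply: (@big_ind _ (fun x => #|boundary e1| * #|boundary e2| <= 2 * x)).
- rewrite card_prod; apply: leq_trans (leq_mul (max_card _) (max_card _)) _.
  by rewrite leq_pmull.
- by move=> x y hx hy; rewrite /minn; case: ifP.
- by move=> S R; apply: (lower g1 g2 n1 n2 c1 c2 reg1 reg2 k0 l0 R).
Qed.
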